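(* Let $\psi,\phi\in C[1,\infty)\cap C^2(1,\infty)$ satisfy: (a) $\phi$ is strictly increasing and $\phi(1)=0$; (b) $\psi$ is bounded, $\psi(1)=0$, $\psi\ge0$ and $\psi$ is not identically $0$; (c) $\lim_{\mu\to\infty}\psi(\mu)/\phi(\mu)=0$. Define, for $z\ge0$, $$\Psi(z)=\sup_{F\in\mathcal F}\Big\{\int\psi(\mu)\,dF(\mu):\int\phi(\mu)\,dF(\mu)\le z\Big\}.$$ Suppose $\lim_{\mu\to1+}\psi(\mu)/\phi(\mu)$ exists and is strictly smaller than $\Psi^*=\sup_{\mu>1}\psi(\mu)/\phi(\mu)$, and set $\mu^*=\max\{\mu>1:\psi(\mu)/\phi(\mu)=\Psi^*\}$. Then for every $0\le z\le\phi(\mu^* )$, $\Psi(z)=\Psi^*\cdot z$, and this value is attained by the mixture of point masses at $1$ and $\mu^*$ with masses $1-\varepsilon(z)$ and $\varepsilon(z)$, respectively, where $\varepsilon(z)=z/\phi(\mu^* )$.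
   Context: $\mathcal F$ denotes the set of all probability distributions $F$ on $[1,\infty)$. *)

(* Defs.v *)
From HB Require Import structures.
From mathcomp Require Import all_boot all_order all_algebra.
From mathcomp Require Import all_classical all_reals all_analysis.
Set Implicit Arguments. Unset Strict Implicit. Unset Printing Implicit Defensive.
Import Order.TTheory GRing.Theory Num.Theory.
Import numFieldNormedType.Exports.
Local Open Scope classical_set_scope.
Local Open Scope ring_scope.

Definition in_calF (R : realType) (F : probability R R) : Prop :=
  F `[1, +oo[%classic = 1%E.

Definition C2_open1 (R : realType) (f : R -> R) : Prop :=
  forall x : R, 1 < x ->
    derivable f x 1 /\ derivable (derive1 f) x 1 /\ {for x, continuous (derive1 (derive1 f))}.

Definition Psi (R : realType) (psi phi : R -> R) (z : R) : \bar R :=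
  ereal_sup [set r : \bar R | exists F : probability R R,
    [/\ in_calF F,
        (\int[F]_(x in `[1%R, +oo[%classic) (phi x)%:E <= z%:E)%E &
        (r = \int[F]_(x in `[1%R, +oo[%classic) (psi x)%:E)%E]].

Definition Psistar (R : realType) (psi phi : R -> R) : \bar R :=
  ereal_sup [set (psi mu / phi mu)%:E | mu in `]1, +oo[].

(* Main.v *)
Require Import Defs.
From HB Require Import structures.
From mathcomp Require Import all_boot all_order all_algebra.
From mathcomp Require Import all_classical all_reals all_analysis.
From mathcomp Require Import measurable_realfun.
Set Implicit Arguments. Unset Strict Implicit. Unset Printing Implicit Defensive.
Import Order.TTheory GRing.Theory Num.Theory.
Import numFieldNormedType.Exports.
Local Open Scope classical_set_scope.
Local Open Scope ring_scope.

Section mix.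
Context (R : realType) (e a b : R).
Definition ce : R := Num.min (Num.max e 0) 1.
Lemma ce_ge0 : 0 <= ce.
Proof. by rewrite /ce le_min ler01 le_max lexx orbT. Qed.
Lemma ce_le1 : ce <= 1.
Proof. by rewrite /ce ge_min lexx orbT. Qed.
Lemma omce_ge0 : 0 <= 1 - ce.
Proof. by rewrite subr_ge0 ce_le1. Qed.

Definition mix (A : set R) : \bar R := ((1 - ce)%:E * \d_a A + ce%:E * \d_b A)%E.

Lemma mixE : mix = measure_add (mscale (NngNum omce_ge0) \d_a) (mscale (NngNum ce_ge0) \d_b).
Proof. by apply/funext => A; rewrite measure_addE. Qed.

Let mix0 : mix set0 = 0%E.
Proof. by rewrite /mix !measure0 !mule0 adde0. Qed.
Let mix_ge0 A : (0 <= mix A)%E.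
Proof. by rewrite /mix adde_ge0 // mule_ge0 // lee_fin ?ce_ge0 ?omce_ge0. Qed.
Let mix_sa : semi_sigma_additive mix.
Proof. rewrite mixE. set m := measure_add _ _. exact: (@measure_semi_sigma_additive _ _ _ m). Qed.

HB.instance Definition _ := isMeasure.Build _ _ _ mix mix0 mix_ge0 mix_sa.

Let mix_setT : mix [set: R] = 1%E.
Proof. by rewrite /mix !diracT !mule1 -EFinD subrK. Qed.

HB.instance Definition _ := Measure_isProbability.Build _ _ _ mix mix_setT.
End mix.

Lemma mixA (R : realType) (e a b : R) (A : set R) :
  mix e a b A = ((1 - ce e)%:E * \d_a A + (ce e)%:E * \d_b A)%E.
Proof. by []. Qed.

Lemma mix_calF (R : realType) (e a b : R) : 1 <= a -> 1 <= b ->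
  mix e a b `[1%R, +oo[%classic = 1%E.
Proof.
move=> a1 b1; rewrite mixA !diracE !mem_set /= ?in_itv /= ?andbT //.
by rewrite !mule1 -EFinD subrK.
Qed.

Lemma ce_id (R : realType) (e : R) : 0 <= e <= 1 -> ce e = e.
Proof.
move=> /andP[e0 e1]; rewrite /ce.
by rewrite (max_idPl e0) (min_idPl e1).
Qed.

Lemma int_mix (R : realType) (e a b : R) (f : R -> R) :
  measurable_fun (`[1%R, +oo[ : set R) f -> (forall x, 1 <= x -> 0 <= f x) ->
  1 <= a -> 1 <= b ->
  (\int[mix e a b]_(x in `[1%R, +oo[) (f x)%:E =
    ((1 - ce e) * f a + ce e * f b)%:E)%E.
Proof.
move=> mf f0 a1 b1.
have mD : measurable (`[1%R, +oo[ : set R) by exact: measurable_itv.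
have mF : measurable_fun (`[1%R, +oo[ : set R) (fun x => (f x)%:E) by exact/measurable_EFinP.
have F0 : forall x, `[1%R, +oo[%classic x -> (0 <= (f x)%:E)%E.
  by move=> x; rewrite /= in_itv /= andbT => x1; rewrite lee_fin f0.
transitivity (\int[measure_add (mscale (NngNum (omce_ge0 e)) \d_a) (mscale (NngNum (ce_ge0 e)) \d_b)]_(x in `[1%R, +oo[%classic) (f x)%:E)%E.
  by apply: eq_measure_integral => A _ _; exact: (congr1 (fun m => m A) (mixE e a b)).
rewrite ge0_integral_measure_add //.
rewrite !ge0_integral_mscale //= !integral_dirac //=.
rewrite !diracE !mem_set /= ?in_itv /= ?andbT // !mul1e.
by rewrite -!EFinM -EFinD.
Qed.

Unset Implicit Arguments.
Theorem lemma3p1 (R : realType) (psi phi : R -> R)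
  (psi_cont : {within `[1, +oo[, continuous psi})
  (phi_cont : {within `[1, +oo[, continuous phi})
  (psi_C2 : C2_open1 psi) (phi_C2 : C2_open1 phi)
  (phi_incr : {in `[1, +oo[ &, {homo phi : x y / x < y}})
  (phi1 : phi 1 = 0)
  (psi_bnd : exists M : R, forall x, 1 <= x -> `|psi x| <= M)
  (psi1 : psi 1 = 0)
  (psi_ge0 : forall x, 1 <= x -> 0 <= psi x)
  (psi_neq0 : exists x, 1 <= x /\ psi x != 0)
  (lim_infty : (psi x / phi x) @[x --> +oo] --> (0 : R))
  (lim_1 : exists L : R, (psi x / phi x) @[x --> 1^'+] --> L /\
                         (L%:E < Psistar psi phi)%E)
  (mu : R) (mu_gt1 : 1 < mu)
  (mu_attains : (psi mu / phi mu)%:E = Psistar psi phi)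
  (mu_max : forall m, 1 < m -> (psi m / phi m)%:E = Psistar psi phi -> m <= mu) :
  forall z : R, 0 <= z <= phi mu ->
    Psi psi phi z = (Psistar psi phi * z%:E)%E /\
    exists F : probability R R,
      [/\ forall A, measurable A ->
            F A = ((1 - z / phi mu)%:E * \d_(1%R : R) A + (z / phi mu)%:E * \d_mu A)%E,
          in_calF F,
          (\int[F]_(x in `[1%R, +oo[%classic) (phi x)%:E <= z%:E)%E &
          (\int[F]_(x in `[1%R, +oo[%classic) (psi x)%:E = Psi psi phi z)%E].
Proof.
move=> z /andP[z0 zmu].
have phipos : forall x, 1 < x -> 0 < phi x.
  move=> x x1; rewrite -phi1; apply: phi_incr => //.
  - by rewrite in_itv /= lexx.
  - by rewrite in_itv /= andbT ltW.
have phi0 : forall x, 1 <= x -> 0 <= phi x.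
  move=> x; rewrite le_eqVlt => /predU1P[<-|x1]; first by rewrite phi1.
  exact/ltW/phipos.
have phimu := phipos _ mu_gt1.
set c := psi mu / phi mu.
have c0 : 0 <= c by rewrite divr_ge0 // ?psi_ge0 ?ltW.
have key : forall x, 1 <= x -> psi x <= c * phi x.
  move=> x; rewrite le_eqVlt => /predU1P[<-|x1]; first by rewrite psi1 phi1 mulr0.
  have px := phipos _ x1.
  have : ((psi x / phi x)%:E <= Psistar psi phi)%E.
    by apply: ereal_sup_ubound; exists x => //=; rewrite in_itv /= andbT.
  by rewrite -mu_attains lee_fin ler_pdivrMr.
have mD : measurable (`[1%R, +oo[ : set R) by exact: measurable_itv.
have mphi : measurable_fun (`[1%R, +oo[ : set R) phi.
  exact: subspace_continuous_measurable_fun.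
have mpsi : measurable_fun (`[1%R, +oo[ : set R) psi.
  exact: subspace_continuous_measurable_fun.
have ub : forall F : probability R R,
    (\int[F]_(x in `[1%R, +oo[) (phi x)%:E <= z%:E)%E ->
    (\int[F]_(x in `[1%R, +oo[) (psi x)%:E <= (c * z)%:E)%E.
  move=> F hF.
  apply: (@le_trans _ _ (\int[F]_(x in `[1%R, +oo[) (c%:E * (phi x)%:E))%E).
    apply: ge0_le_integral => //.
    - by move=> x; rewrite /= in_itv /= andbT => x1; rewrite lee_fin psi_ge0.
    - exact/measurable_EFinP.
    - by apply: measurable_funeM; exact/measurable_EFinP.
    - by move=> x; rewrite /= in_itv /= andbT => x1; rewrite -EFinM lee_fin key.
  rewrite ge0_integralZl_EFin //.
  - by rewrite [X in (_ <= X)%E]EFinM; apply: lee_wpmul2l => //; rewrite lee_fin.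
  - by move=> x; rewrite /= in_itv /= andbT => x1; rewrite lee_fin phi0.
  - exact/measurable_EFinP.
set e := z / phi mu.
have e01 : 0 <= e <= 1.
  by rewrite /e divr_ge0 ?(ltW phimu) //= ler_pdivrMr // mul1r.
have cee := ce_id e01.
have intpsi : (\int[mix e 1 mu]_(x in `[1%R, +oo[) (psi x)%:E = (c * z)%:E)%E.
  rewrite int_mix // ?ltW // cee psi1 mulr0 add0r; congr EFin.
  by rewrite /e /c mulrAC [in RHS]mulrAC (mulrC z).
have intphi : (\int[mix e 1 mu]_(x in `[1%R, +oo[) (phi x)%:E = z%:E)%E.
  rewrite int_mix // ?ltW // ?phi0 // cee phi1 mulr0 add0r; congr EFin.
  by rewrite /e divfK // gt_eqF.
have PsiE : Psi psi phi z = (c * z)%:E.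
  apply/le_anti/andP; split.
    apply: ge_ereal_sup => _ [F [_ hF ->]]; exact: ub.
  apply: ereal_sup_ubound; exists (mix e 1 mu); split => //.
  - by apply: mix_calF => //; rewrite ltW.
  - by rewrite intphi.
split; first by rewrite PsiE -mu_attains EFinM.
exists (mix e 1 mu); split.
- by move=> A _; have := mixA e 1 mu A; rewrite cee.
- by apply: mix_calF => //; rewrite ltW.
- by rewrite intphi.
- by rewrite intpsi PsiE.
Qed.
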